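(* Let $\mathcal B=(\mathcal T,A,p,c)$ be a BMDP with $n=|\mathcal T|$, let $F:[0,\infty]^n\to[0,\infty]^n$ be its fixed-point operator, let $\mathbf c^*\in[0,\infty]^n$ be the vector of optimal expected total costs, and let $\mathbf x^0=\mathbf 0$, $\mathbf x^{k+1}=F(\mathbf x^k)$ for $k\ge 0$. Then: (a) $F$ is monotone (i.e. $\mathbf x\le\mathbf y$ implies $F(\mathbf x)\le F(\mathbf y)$) and continuous (i.e. $F(\lim_k \mathbf y^k)=\lim_k F(\mathbf y^k)$ for every nondecreasing sequence $(\mathbf y^k)$ in $[0,\infty]^n$); consequently $\mathbf 0\le\mathbf x^k\le\mathbf x^{k+1}$ for all $k\ge0$. (b) $\mathbf c^*=F(\mathbf c^* )$. (c) $\mathbf x^k\le\mathbf c^*$ for all $k\ge 0$. (d) For every $\mathbf c'\in[0,\infty]^n$ with $\mathbf c'=F(\mathbf c')$, we have $\mathbf c^*\le\mathbf c'$. (e) $\mathbf c^*=\lim_{k\to\infty}\mathbf x^k$.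
   Context: A branching Markov decision process (BMDP) is a tuple $\mathcal B=(\mathcal T,A,p,c)$ where $\mathcal T$ is a finite set of types, $A$ is a finite set of actions, $p:\mathcal T\times A\to \mathrm{Dist}(\mathcal T^* )$ is a partial function assigning to some pairs $(q,a)$ a probability distribution with finite support over the set $\mathcal T^*$ of finite lists (words) of types, and $c:\mathcal T\times A\to\mathbb R_{>0}$ is a cost function with strictly positive values. $A(q)$ denotes the (nonempty) set of actions $a$ for which $p(q,a)$ is defined. A branching Markov chain (BMC) is a BMDP with $|A(q)|=1$ for every $q$. For a list $\alpha$, $|\alpha|$ is its length and $\alpha_i$ its $i$-th element; $\varepsilon$ is the empty list. Semantics: the BMDP induces an MDP whose states are lists $\alpha\in\mathcal T^*$ (of ''entities''). In state $\alpha$ the enabled actions are pairs $(i,a)$ with $1\le i\le|\alpha|$ and $a\in A(\alpha_i)$; taking $(i,a)$ incurs cost $c(\alpha_i,a)$ and moves to $\alpha_1\cdots\alpha_{i-1}\cdot\beta\cdot\alpha_{i+1}\cdots\alpha_{|\alpha|}$ with probability $p(\alpha_i,a)(\beta)$, for each $\beta\in\mathcal T^*$. The state $\varepsilon$ has no actions; once reached, the process stays there forever and incurs no further cost. A strategy maps each finite history (path) to a probability distribution over the actions enabled in its last state; a strategy $\sigma$ and initial state $\alpha$ induce a probability measure on runs. $\mathrm{ETotal}_N(\alpha,\sigma)$ denotes the expected sum of the costs incurred in the first $N$ steps; $\mathrm{ETotal}_*(\alpha,\sigma)=\lim_{N\to\infty}\mathrm{ETotal}_N(\alpha,\sigma)\in[0,\infty]$;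 and $\mathrm{ETotal}_*(\alpha)=\inf_\sigma \mathrm{ETotal}_*(\alpha,\sigma)$ over all strategies. The vector $\mathbf c^*\in[0,\infty]^{\mathcal T}$ is defined by $\mathbf c^*_q=\mathrm{ETotal}_*(q)$ (starting from the one-entity list $q$). The fixed-point operator $F:[0,\infty]^{\mathcal T}\to[0,\infty]^{\mathcal T}$ is $F(\mathbf x)_q=\min_{a\in A(q)}\Big(c(q,a)+\sum_{\alpha\in\mathcal T^*}p(q,a)(\alpha)\sum_{i=1}^{|\alpha|}\mathbf x_{\alpha_i}\Big)$, with conventions $0\cdot\infty=0$ and $r+\infty=\infty$. Vectors are compared componentwise. *)

(* Defs.v *)
From HB Require Import structures.
From mathcomp Require Import all_boot all_order all_algebra.
From mathcomp Require Import all_classical all_reals all_analysis.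
Set Implicit Arguments. Unset Strict Implicit. Unset Printing Implicit Defensive.
Import Order.TTheory GRing.Theory Num.Theory.
Local Open Scope ring_scope.

(* A BMDP over a finite set of types T and a finite set of actions A.
   - enab q a  : a \in A(q)  (p(q,a) is defined)
   - trans q a : the finite-support distribution p(q,a) over T^*, given as a
                 finite list of weighted outcomes (word, probability)
                 (the probability of a word is the total weight of its entries)
   - cost q a  : c(q,a). *)
Record bmdp (R : realType) (T A : finType) := Bmdp {
  enab  : T -> A -> bool;
  trans : T -> A -> seq (seq T * R);
  cost  : T -> A -> R }.

Definition wf_bmdp (R : realType) (T A : finType) (B : bmdp R T A) : Prop :=
  (forall q, exists a, enab B q a) /\
  (forall q a, enab B q a ->
     (forall bw, bw \in trans B q a -> 0 <= bw.2) /\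
     \sum_(bw <- trans B q a) bw.2 = 1) /\
  (forall q a, 0 < cost B q a).

Definition Fop (R : realType) (T A : finType) (B : bmdp R T A)
    (x : T -> \bar R) (q : T) : \bar R :=
  \big[Order.min/+oo%E]_(a : A | enab B q a)
    ((cost B q a)%:E +
      \sum_(bw <- trans B q a) ((bw.2)%:E * \sum_(t <- bw.1) x t))%E.

(* Semantics: the induced MDP on states seq T.
   A history is an initial state followed by a list of steps
   (action (i,a), resulting state); indices i are 0-based. *)
Definition hist (T A : finType) := (seq T * seq ((nat * A) * seq T))%type.

Definition last_state (T A : finType) (h : hist T A) : seq T :=
  last h.1 [seq s.2 | s <- h.2].

Definition strategy (R : realType) (T A : finType) := hist T A -> nat * A -> R.

Definition valid_strategy (R : realType) (T A : finType) (B : bmdp R T A)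
    (s : strategy R T A) : Prop :=
  forall h : hist T A, let al := last_state h in al <> [::] ->
    (forall (i : 'I_(size al)) (a : A), enab B (tnth (in_tuple al) i) a ->
        0 <= s h (val i, a)) /\
    \sum_(i < size al) \sum_(a : A | enab B (tnth (in_tuple al) i) a)
        s h (val i, a) = 1.

Definition replace_at (T : Type) (al : seq T) (i : nat) (beta : seq T) :=
  take i al ++ beta ++ drop i.+1 al.

Fixpoint ETN (R : realType) (T A : finType) (B : bmdp R T A)
    (s : strategy R T A) (N : nat) (h : hist T A) {struct N} : R :=
  match N with
  | 0 => 0
  | N'.+1 =>
    let al := last_state h in
    \sum_(i < size al) \sum_(a : A | enab B (tnth (in_tuple al) i) a)
      s h (val i, a) *
        (cost B (tnth (in_tuple al) i) a +
         \sum_(bw <- trans B (tnth (in_tuple al) i) a)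
            bw.2 * ETN B s N'
              (h.1, rcons h.2 ((val i, a), replace_at al i bw.1)))
  end.

Definition ETotalN (R : realType) (T A : finType) (B : bmdp R T A)
    (s : strategy R T A) (N : nat) (al : seq T) : R :=
  ETN B s N (al, [::]).

Definition ETotal_star_s (R : realType) (T A : finType) (B : bmdp R T A)
    (s : strategy R T A) (al : seq T) : \bar R :=
  limn (fun N => (ETotalN B s N al)%:E).

Definition ETotal_star (R : realType) (T A : finType) (B : bmdp R T A)
    (al : seq T) : \bar R :=
  ereal_inf [set ETotal_star_s B s al | s in [set s | valid_strategy B s]].

Definition cstar (R : realType) (T A : finType) (B : bmdp R T A) (q : T)
  : \bar R := ETotal_star B [:: q].

Definition xiter (R : realType) (T A : finType) (B : bmdp R T A) (k : nat)
  : T -> \bar R := iter k (Fop B) (fun _ => 0%E).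

Definition vle (R : realType) (T : finType) (x y : T -> \bar R) : Prop :=
  forall q, (x q <= y q)%E.

Definition nonneg_vec (R : realType) (T : finType) (x : T -> \bar R) : Prop :=
  forall q, (0 <= x q)%E.

(* Main.v *)
Require Import Defs.
From HB Require Import structures.
From mathcomp Require Import all_boot all_order all_algebra.
From mathcomp Require Import all_classical all_reals all_analysis.
Import Order.TTheory GRing.Theory Num.Theory.
Local Open Scope ring_scope.
Local Open Scope classical_set_scope.
Set Implicit Arguments. Unset Strict Implicit. Unset Printing Implicit Defensive.



Section Part1.
Variables (R : realType) (T A : finType) (B : bmdp R T A).
Hypothesis HB : wf_bmdp B.

Definition term (x : T -> \bar R) q a : \bar R :=
  ((cost B q a)%:E +
      \sum_(bw <- trans B q a) ((bw.2)%:E * \sum_(t <- bw.1) x t))%E.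

Lemma FopE x q : Fop B x q = \big[Order.min/+oo%E]_(a | enab B q a) term x q a.
Proof. by []. Qed.

Lemma p_ge0 q a bw : enab B q a -> bw \in trans B q a -> 0 <= bw.2.
Proof. by case: HB => _ [H _] ea bin; apply: (proj1 (H q a ea)). Qed.

Lemma p_sum1 q a : enab B q a -> \sum_(bw <- trans B q a) bw.2 = 1.
Proof. by case: HB => _ [H _] ea; apply: (proj2 (H q a ea)). Qed.

Lemma cost_gt0 q a : 0 < cost B q a.
Proof. by case: HB => _ [_ H]. Qed.

Lemma term_ge0 x q a : nonneg_vec x -> enab B q a -> (0 <= term x q a)%E.
Proof.
move=> x0 ea; rewrite /term adde_ge0 //; first by rewrite lee_fin ltW ?cost_gt0.
rewrite big_seq; apply: sume_ge0 => bw bin; apply: mule_ge0.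
  by rewrite lee_fin (p_ge0 ea bin).
by apply: sume_ge0 => t _.
Qed.

Lemma term_mono x y q a : nonneg_vec x -> vle x y -> enab B q a ->
  (term x q a <= term y q a)%E.
Proof.
move=> x0 xy ea; rewrite /term leeD2l // big_seq [X in (_ <= X)%E]big_seq.
apply: lee_sum => bw bin; apply: lee_wpmul2l; first by rewrite lee_fin (p_ge0 ea bin).
by apply: lee_sum => t _.
Qed.

Lemma Fop_mono x y : nonneg_vec x -> vle x y -> vle (Fop B x) (Fop B y).
Proof.
move=> x0 xy q; rewrite !FopE; apply: le_bigmin2 => a ea; exact: term_mono.
Qed.

Lemma Fop_ge0 x : nonneg_vec x -> nonneg_vec (Fop B x).
Proof.
move=> x0 q; rewrite FopE; apply: le_bigmin; first by rewrite leey.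
by move=> a ea; apply: term_ge0.
Qed.

Lemma Fop_le_term x q a : enab B q a -> (Fop B x q <= term x q a)%E.
Proof. by move=> ea; rewrite FopE; apply: bigmin_le_cond. Qed.

Lemma Fop_argmin x q : exists2 a, enab B q a & Fop B x q = term x q a.
Proof.
case: HB => [H _]; case: (H q) => a0 ea0.
exists [arg min_(a < a0 | enab B q a) term x q a]%O.
  by case: (Order.TotalTheory.arg_minP (fun a => term x q a) ea0).
rewrite FopE (bigmin_eq_arg _ a0 (fun a => enab B q a) (fun a => term x q a) ea0).
  by []. by move=> *; rewrite leey.
Qed.

Lemma term_fin x q a : (forall t, x t \is a fin_num) -> term x q a \is a fin_num.
Proof.
move=> xf; rewrite /term fin_numD /=; apply/sum_fin_numP => bw _ _.
by rewrite fin_numM //; apply/sum_fin_numP => t _ _; exact: xf.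
Qed.

Lemma Fop_fin x : nonneg_vec x -> (forall t, x t \is a fin_num) ->
  forall q, Fop B x q \is a fin_num.
Proof.
move=> x0 xf q; case: (Fop_argmin x q) => a ea ->; exact: term_fin.
Qed.


Lemma cvg_bigmin_seq (I : Type) (r : seq I) (P : pred I) (f : I -> nat -> \bar R)
  (l : I -> \bar R) :
  (forall i, P i -> f i k @[k --> \oo] --> l i) ->
  (\big[Order.min/+oo%E]_(i <- r | P i) f i k) @[k --> \oo] -->
     \big[Order.min/+oo%E]_(i <- r | P i) l i.
Proof.
move=> fl; elim: r => [|i r IH].
  rewrite big_nil; under eq_fun do rewrite big_nil; exact: cvg_cst.
rewrite big_cons; under eq_fun do rewrite big_cons.
case: ifP => Pi; last exact: IH.
apply: (@continuous2_cvg _ _ _ _ _ _ _ _ (fun a b : \bar R => Order.min a b)).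
- exact: (@min_continuous _ (\bar R) (_, _)).
- exact: fl.
- exact: IH.
Qed.

Lemma Fop_cont (y : nat -> T -> \bar R) :
  (forall k, nonneg_vec (y k)) -> (forall k, vle (y k) (y k.+1)) ->
  forall q, (fun k => Fop B (y k) q) @ \oo -->
                 Fop B (fun t => limn (fun k => y k t)) q.
Proof.
move=> y0 ymon q.
have cy : forall t, (fun k => y k t) @ \oo --> limn (fun k => y k t).
  move=> t; apply: ereal_nondecreasing_is_cvgn; apply/nondecreasing_seqP => k.
  exact: ymon.
have ly0 : forall t, (0 <= limn (fun k => y k t))%E.
  move=> t; apply: (cvge_ge _ (cy t)); apply: nearW => k; exact: y0.
rewrite FopE; under eq_fun do rewrite FopE.
apply: cvg_bigmin_seq => a ea; rewrite /term.
apply: cvgeD; last 2 first.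
- exact: cvg_cst.
- rewrite big_seq; under eq_fun do rewrite big_seq.
  apply: cvg_nnesum => bw bin.
    apply: nearW => k; apply: mule_ge0; first by rewrite lee_fin (p_ge0 ea bin).
    by apply: sume_ge0 => t _; exact: y0.
  apply: cvgeZl => //; apply: cvg_nnesum => t _; last exact: cy.
  by apply: nearW => k; exact: y0.
rewrite ge0_adde_def // inE; first by rewrite lee_fin ltW ?cost_gt0.
rewrite big_seq; apply: sume_ge0 => bw bin; apply: mule_ge0.
  by rewrite lee_fin (p_ge0 ea bin).
by apply: sume_ge0.
Qed.

Lemma xiter_ge0 k : nonneg_vec (xiter B k).
Proof.
elim: k => [|k IH] q; first by rewrite /xiter /=.
by rewrite /xiter iterS; apply: Fop_ge0.
Qed.

Lemma xiter_mono k : vle (xiter B k) (xiter B k.+1).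
Proof.
elim: k => [|k IH] q; first by have := xiter_ge0 1 q.
rewrite /xiter !iterS; apply: Fop_mono => //.
exact: xiter_ge0.
Qed.

Lemma xiter_fin k q : xiter B k q \is a fin_num.
Proof.
elim: k q => [|k IH] q; first by rewrite /xiter.
rewrite /xiter iterS; apply: Fop_fin => //; exact: xiter_ge0.
Qed.

Definition xr k q : R := fine (xiter B k q).

Lemma xrE k q : xiter B k q = (xr k q)%:E.
Proof. by rewrite /xr fineK // xiter_fin. Qed.

Lemma xr_ge0 k q : 0 <= xr k q.
Proof. by rewrite -lee_fin -xrE; apply: xiter_ge0. Qed.

Lemma xr0 q : xr 0 q = 0.
Proof. by []. Qed.

Lemma xr_step d q a : enab B q a ->
  xr d q <= cost B q a + \sum_(bw <- trans B q a) bw.2 * \sum_(t <- bw.1) xr d.-1 t.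
Proof.
move=> ea; case: d => [|d] /=.
  rewrite xr0; apply: addr_ge0; first exact: ltW (cost_gt0 _ _).
  rewrite big_seq; apply: sumr_ge0 => bw bin; apply: mulr_ge0; first exact: p_ge0 ea bin.
  by apply: sumr_ge0 => t _; rewrite xr0.
rewrite -lee_fin -xrE /xiter iterS.
apply: le_trans (Fop_le_term _ ea) _; rewrite /term EFinD leeD2l //.
rewrite -sumEFin big_seq [X in (_ <= X)%E]big_seq; apply: lee_sum => bw bin; rewrite EFinM -sumEFin.
apply: lee_wpmul2l; first by rewrite lee_fin (p_ge0 ea bin).
by apply: lee_sum => t _; rewrite -/(xiter B d t) xrE.
Qed.
End Part1.



Lemma wavg_ge (R : realType) (I : Type) (r : seq I) (P : pred I) (w X : I -> R) lo :
  (forall i, P i -> 0 <= w i) -> \sum_(i <- r | P i) w i = 1 ->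
  (forall i, P i -> lo <= X i) -> lo <= \sum_(i <- r | P i) w i * X i.
Proof.
move=> w0 w1 Xl; rewrite -[lo]mul1r -{1}w1 mulr_suml; apply: ler_sum => i Pi.
by rewrite ler_wpM2l ?w0 ?Xl.
Qed.

Lemma wavg_le (R : realType) (I : Type) (r : seq I) (P : pred I) (w X : I -> R) up :
  (forall i, P i -> 0 <= w i) -> \sum_(i <- r | P i) w i = 1 ->
  (forall i, P i -> X i <= up) -> \sum_(i <- r | P i) w i * X i <= up.
Proof.
move=> w0 w1 Xl; rewrite -[up]mul1r -{1}w1 mulr_suml; apply: ler_sum => i Pi.
by rewrite ler_wpM2l ?w0 ?Xl.
Qed.

Lemma big_empty (R : realType) (T : Type) (al : seq T) (F : 'I_(size al) -> R) :
  al = [::] -> \sum_(i < size al) F i = 0.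
Proof. by case: al F => // F _; rewrite big_ord0. Qed.

Section Part2.
Variables (R : realType) (T A : finType) (B : bmdp R T A).
Hypothesis HB : wf_bmdp B.
Variable s : strategy R T A.
Hypothesis Hs : valid_strategy B s.

Definition nxt (h : hist T A) (i : nat) (a : A) (be : seq T) : hist T A :=
  (h.1, rcons h.2 ((i, a), replace_at (last_state h) i be)).

Lemma last_nxt h i a be : last_state (nxt h i a be) = replace_at (last_state h) i be.
Proof. by rewrite /last_state /nxt /= map_rcons last_rcons. Qed.

Fixpoint QN (N : nat) (h : hist T A) {struct N} : R :=
  match N with
  | 0 => if last_state h is [::] then 0 else 1
  | N'.+1 =>
    let al := last_state h in
    \sum_(i < size al) \sum_(a : A | enab B (tnth (in_tuple al) i) a)
      s h (val i, a) *
         \sum_(bw <- trans B (tnth (in_tuple al) i) a)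
            bw.2 * QN N' (nxt h i a bw.1)
  end.

Lemma ETN_S N h : ETN B s N.+1 h =
    let al := last_state h in
    \sum_(i < size al) \sum_(a : A | enab B (tnth (in_tuple al) i) a)
      s h (val i, a) *
        (cost B (tnth (in_tuple al) i) a +
         \sum_(bw <- trans B (tnth (in_tuple al) i) a)
            bw.2 * ETN B s N (nxt h i a bw.1)).
Proof. by []. Qed.

Lemma s_ge0 h (i : 'I_(size (last_state h))) a :
  enab B (tnth (in_tuple (last_state h)) i) a -> 0 <= s h (val i, a).
Proof.
move=> ea; have ne : last_state h <> [::].
  by move=> E; have := ltn_ord i; move: (nat_of_ord i) => n; rewrite E.
exact: (proj1 (Hs ne) i a ea).
Qed.

Lemma s_sum1 h : last_state h <> [::] ->
  \sum_(i < size (last_state h))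
    \sum_(a : A | enab B (tnth (in_tuple (last_state h)) i) a) s h (val i, a) = 1.
Proof. by move=> ne; exact: (proj2 (Hs ne)). Qed.

Lemma wavg2_ge h (X : 'I_(size (last_state h)) -> A -> R) lo :
  last_state h <> [::] ->
  (forall i a, enab B (tnth (in_tuple (last_state h)) i) a -> lo <= X i a) ->
  lo <= \sum_(i < size (last_state h))
    \sum_(a : A | enab B (tnth (in_tuple (last_state h)) i) a) s h (val i, a) * X i a.
Proof.
move=> ne Xl; rewrite -[lo]mul1r -{1}(s_sum1 ne) mulr_suml; apply: ler_sum => i _.
rewrite mulr_suml; apply: ler_sum => a ea.
by rewrite ler_wpM2l ?(s_ge0 ea) ?Xl.
Qed.

Lemma wavg2_le h (X : 'I_(size (last_state h)) -> A -> R) up :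
  last_state h <> [::] ->
  (forall i a, enab B (tnth (in_tuple (last_state h)) i) a -> X i a <= up) ->
  \sum_(i < size (last_state h))
    \sum_(a : A | enab B (tnth (in_tuple (last_state h)) i) a) s h (val i, a) * X i a <= up.
Proof.
move=> ne Xl; rewrite -[up]mul1r -{1}(s_sum1 ne) mulr_suml; apply: ler_sum => i _.
rewrite mulr_suml; apply: ler_sum => a ea.
by rewrite ler_wpM2l ?(s_ge0 ea) ?Xl.
Qed.

Lemma wmono2 h (X Y : 'I_(size (last_state h)) -> A -> R) :
  (forall i a, enab B (tnth (in_tuple (last_state h)) i) a -> X i a <= Y i a) ->
  \sum_(i < size (last_state h))
    \sum_(a : A | enab B (tnth (in_tuple (last_state h)) i) a) s h (val i, a) * X i a <=
  \sum_(i < size (last_state h))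
    \sum_(a : A | enab B (tnth (in_tuple (last_state h)) i) a) s h (val i, a) * Y i a.
Proof.
move=> XY; apply: ler_sum => i _; apply: ler_sum => a ea.
by rewrite ler_wpM2l ?(s_ge0 ea) ?XY.
Qed.

Lemma QN_bounds N h : 0 <= QN N h <= 1.
Proof.
elim: N h => [|N IH] h /=; first by case: (last_state h) => [|? ?]; rewrite ?lexx ?ler01.
have [E|ne] := eqVneq (last_state h) [::].
  by rewrite (big_empty _ E) lexx ler01.
apply/andP; split.
  apply: wavg2_ge => [|i a ea]; first by move/eqP: ne.
  rewrite big_seq; apply: sumr_ge0 => bw bin.
  by rewrite mulr_ge0 ?(p_ge0 HB ea bin) //; case/andP: (IH (nxt h i a bw.1)).
apply: (wavg2_le (up := 1)) => [|i a ea]; first by move/eqP: ne.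
rewrite big_seq; apply: wavg_le => [bw bin||bw bin].
- exact: (p_ge0 HB ea bin).
- by rewrite -big_seq (p_sum1 HB ea).
- by case/andP: (IH (nxt h i a bw.1)).
Qed.


Definition cmin : R := \big[Order.min/1]_(qa : T * A) cost B qa.1 qa.2.

Lemma cmin_gt0 : 0 < cmin.
Proof.
rewrite /cmin; apply: (big_ind (fun x => 0 < x)) => //.
  by move=> x y x0 y0; rewrite lt_min x0 y0.
by move=> qa _; apply: (cost_gt0 HB).
Qed.

Lemma cmin_le q a : cmin <= cost B q a.
Proof. by rewrite /cmin; apply: (bigmin_le _ (q, a)). Qed.

Lemma QN_ETN N h : cmin * N%:R * QN N h <= ETN B s N h.
Proof.
elim: N h => [|N IH] h; first by rewrite mulr0 mul0r.
rewrite ETN_S /=.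
have [E|ne] := eqVneq (last_state h) [::].
  by rewrite !(big_empty _ E) mulr0.
rewrite mulr_sumr; apply: ler_sum => i _; rewrite mulr_sumr; apply: ler_sum => a ea.
rewrite mulrCA; apply: ler_wpM2l; first exact: (s_ge0 ea).
rewrite mulr_sumr.
apply: (@le_trans _ _ (\sum_(bw <- trans B (tnth (in_tuple (last_state h)) i) a)
    bw.2 * (cmin + ETN B s N (nxt h i a bw.1)))).
  rewrite big_seq [X in (_ <= X)]big_seq; apply: ler_sum => bw bin.
  rewrite mulrCA; apply: ler_wpM2l; first exact: (p_ge0 HB ea bin).
  have [Q0 Q1] := andP (QN_bounds N (nxt h i a bw.1)).
  rewrite -addn1 natrD mulrDr mulr1 mulrDl addrC; apply: lerD.
    by rewrite -[X in (_ <= X)]mulr1; apply: ler_wpM2l => //; apply: ltW cmin_gt0.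
  exact: IH.
rewrite (eq_bigr _ (fun bw _ => mulrDr _ _ _)).
rewrite big_split /= -mulr_suml (p_sum1 HB ea) mul1r; apply: lerD => //.
exact: cmin_le.
Qed.

Lemma ETN_ge0 N h : 0 <= ETN B s N h.
Proof.
apply: le_trans (QN_ETN N h); apply: mulr_ge0; last by case/andP: (QN_bounds N h).
by apply: mulr_ge0 => //; apply: ltW cmin_gt0.
Qed.

Lemma ETN_mono N h : ETN B s N h <= ETN B s N.+1 h.
Proof.
elim: N h => [|N IH] h; first exact: ETN_ge0.
rewrite (ETN_S N.+1) ETN_S /=.
apply: wmono2 => i a ea; rewrite lerD2l big_seq [X in (_ <= X)]big_seq.
apply: ler_sum => bw bin; apply: ler_wpM2l; first exact: (p_ge0 HB ea bin).
exact: IH.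
Qed.

Lemma ET_cvg al : (fun N => (ETotalN B s N al)%:E) @ \oo --> ETotal_star_s B s al.
Proof.
apply: ereal_nondecreasing_is_cvgn; apply/nondecreasing_seqP => N.
by rewrite lee_fin; apply: ETN_mono.
Qed.

Lemma ET_ge N al : ((ETotalN B s N al)%:E <= ETotal_star_s B s al)%E.
Proof.
have := cvge_ge _ (@ET_cvg al). move=> H. apply: H. exists N => // n /= Nn.
rewrite lee_fin; elim: n Nn => [|n IH]; first by rewrite leqn0 => /eqP ->.
rewrite leq_eqVlt => /orP[/eqP -> //|]; rewrite ltnS => /IH /le_trans; apply.
exact: ETN_mono.
Qed.

Lemma ET_le al (M : \bar R) : (forall N, ((ETotalN B s N al)%:E <= M)%E) ->
  (ETotal_star_s B s al <= M)%E.
Proof. move=> H; have := cvge_le _ (@ET_cvg al); apply; exact: nearW. Qed.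

End Part2.



Section Part3.
Variables (R : realType) (T A : finType) (B : bmdp R T A).
Hypothesis HB : wf_bmdp B.

Definition Lw : nat := \max_(qa : T * A) \max_(bw <- trans B qa.1 qa.2) size bw.1.

Lemma size_Lw q a bw : bw \in trans B q a -> (size bw.1 <= Lw)%N.
Proof.
move=> bin; apply: leq_trans (leq_bigmax (q, a)) => /=.
exact: (leq_bigmax_seq (F := fun bw : seq T * R => size bw.1) bw bin).
Qed.

Notation xr := (xr B).

Fixpoint gg (d : nat) : R :=
  match d with 0 => 0 | d'.+1 => \sum_(q : T) xr d'.+1 q + Lw%:R * gg d' end.

Lemma gg_ge0 d : 0 <= gg d.
Proof.
elim: d => [|d IH] //=; apply: addr_ge0; first by apply: sumr_ge0 => q _; exact: xr_ge0.
by apply: mulr_ge0.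
Qed.

Lemma xr_le_gg d q : xr d q <= gg d.
Proof.
case: d => [|d] /=; first by rewrite xr0.
apply: le_trans (_ : \sum_(q0 : T) xr d.+1 q0 <= _); last first.
  by rewrite lerDl; apply: mulr_ge0 => //; exact: gg_ge0.
rewrite (bigD1 q) //= lerDl; apply: sumr_ge0 => t _; exact: xr_ge0.
Qed.

Lemma gg_step d (be : seq T) : (size be <= Lw)%N -> (size be)%:R * gg d.-1 <= gg d.
Proof.
case: d => [|d] /= Hs; first by rewrite mulr0.
apply: le_trans (_ : Lw%:R * gg d <= _).
  by apply: ler_wpM2r; [exact: gg_ge0 | rewrite ler_nat].
by rewrite lerDr; apply: sumr_ge0 => q _; exact: xr_ge0.
Qed.

Definition Vf (al : seq T) (b : seq nat) : R := \sum_(tb <- zip al b) xr tb.2 tb.1.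
Definition Pf (b : seq nat) : R := \sum_(d <- b) gg d.

Lemma Pf_ge0 b : 0 <= Pf b.
Proof. by apply: sumr_ge0 => d _; exact: gg_ge0. Qed.

Lemma V_le_P al b : size al = size b -> Vf al b <= Pf b.
Proof.
elim: al b => [|t al IH] [|d b] //= => [_|[E]]; first by rewrite /Vf /Pf !big_nil.
rewrite /Vf /Pf !big_cons; apply: lerD; first exact: xr_le_gg.
exact: IH.
Qed.

Lemma Vf_cat al1 al2 b1 b2 : size al1 = size b1 ->
  Vf (al1 ++ al2) (b1 ++ b2) = Vf al1 b1 + Vf al2 b2.
Proof. by move=> E; rewrite /Vf zip_cat // big_cat. Qed.

Lemma Vf_nseq be d : Vf be (nseq (size be) d) = \sum_(t <- be) xr d t.
Proof. by elim: be => [|t be IH]; rewrite /Vf ?big_nil //= !big_cons -IH. Qed.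

Lemma Pf_cat b1 b2 : Pf (b1 ++ b2) = Pf b1 + Pf b2.
Proof. by rewrite /Pf big_cat. Qed.

Lemma Pf_nseq n d : Pf (nseq n d) = n%:R * gg d.
Proof.
elim: n => [|n IH]; first by rewrite /Pf big_nil mul0r.
by rewrite /Pf /= big_cons -/(Pf _) IH -addn1 natrD mulrDl mul1r addrC.
Qed.

Lemma split_at (X : Type) (x0 : X) (l : seq X) i : (i < size l)%N ->
  l = take i l ++ nth x0 l i :: drop i.+1 l.
Proof. by move=> il; rewrite -(drop_nth x0 il) cat_take_drop. Qed.

Lemma V_split al b i t0 : (i < size al)%N -> size b = size al ->
  Vf al b = Vf (take i al) (take i b) + xr (nth 0%N b i) (nth t0 al i)
            + Vf (drop i.+1 al) (drop i.+1 b).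
Proof.
move=> il E; have ib : (i < size b)%N by rewrite E.
rewrite {1}(split_at t0 il) {1}(split_at 0%N ib) Vf_cat; last by rewrite !size_take E.
by rewrite /Vf /= big_cons addrA.
Qed.

Lemma P_split b i : (i < size b)%N ->
  Pf b = Pf (take i b) + gg (nth 0%N b i) + Pf (drop i.+1 b).
Proof.
move=> ib; rewrite {1}(split_at 0%N ib) Pf_cat.
by rewrite /Pf /= big_cons addrA.
Qed.

Lemma V_rep al b i be d : (i < size al)%N -> size b = size al ->
  Vf (replace_at al i be) (replace_at b i (nseq (size be) d)) =
  Vf (take i al) (take i b) + \sum_(t <- be) xr d t + Vf (drop i.+1 al) (drop i.+1 b).
Proof.
move=> il E; rewrite /replace_at Vf_cat; last by rewrite !size_take E.
by rewrite Vf_cat ?size_nseq // Vf_nseq addrA.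
Qed.

Lemma P_rep b i n d : Pf (replace_at b i (nseq n d)) =
  Pf (take i b) + n%:R * gg d + Pf (drop i.+1 b).
Proof. by rewrite /replace_at !Pf_cat Pf_nseq addrA. Qed.

Lemma size_rep (X : Type) (l : seq X) i (be : seq X) : (i < size l)%N ->
  size (replace_at l i be) = (i + size be + (size l - i.+1))%N.
Proof. by move=> il; rewrite /replace_at !size_cat size_take il size_drop addnA. Qed.

End Part3.



Lemma wsum_const (R : realType) (I : Type) (r : seq I) (w Y : I -> R) c0 :
  \sum_(i <- r) w i = 1 ->
  \sum_(i <- r) w i * (c0 + Y i) = c0 + \sum_(i <- r) w i * Y i.
Proof.
move=> w1; rewrite (eq_bigr _ (fun i _ => mulrDr _ _ _)) big_split /=.
by rewrite -mulr_suml w1 mul1r.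
Qed.

Section Part4.
Variables (R : realType) (T A : finType) (B : bmdp R T A).
Hypothesis HB : wf_bmdp B.
Variable s : strategy R T A.
Hypothesis Hs : valid_strategy B s.

Lemma V_bound N : forall h b, size b = size (last_state h) ->
  Vf B (last_state h) b <= ETN B s N h + Pf B b * QN B s N h.
Proof.
elim: N => [|N IH] h b Eb.
  rewrite /= add0r; case E: (last_state h) => [|t al].
    by case: (b) => [|? ?]; rewrite /Vf /= big_nil mulr0.
  by rewrite mulr1; apply: V_le_P => //; rewrite Eb E.
have [E|ne] := eqVneq (last_state h) [::].
  by rewrite ETN_S /= !(big_empty _ E) mulr0 addr0 E /Vf; case: (b) => [|? ?]; rewrite /= big_nil.
rewrite ETN_S /=.
apply: (@le_trans _ _ (\sum_(i < size (last_state h))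
    \sum_(a : A | enab B (tnth (in_tuple (last_state h)) i) a)
      s h (val i, a) *
        (cost B (tnth (in_tuple (last_state h)) i) a +
         \sum_(bw <- trans B (tnth (in_tuple (last_state h)) i) a)
            bw.2 * (ETN B s N (nxt h i a bw.1) + Pf B b * QN B s N (nxt h i a bw.1))))).
  apply: (wavg2_ge Hs); first by move/eqP: ne.
  move=> i a ea.
  have qE : nth (tnth (in_tuple (last_state h)) i) (last_state h) i =
     tnth (in_tuple (last_state h)) i.
    by rewrite [RHS](tnth_nth (tnth (in_tuple (last_state h)) i)).
  set q := tnth (in_tuple (last_state h)) i in qE *.
  have il : (i < size (last_state h))%N := ltn_ord i.
  set d := nth 0%N b i.
  have ib : (i < size b)%N by rewrite Eb.
  apply: (@le_trans _ _ (cost B q a + \sum_(bw <- trans B q a) bw.2 *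
     Vf B (replace_at (last_state h) i bw.1) (replace_at b i (nseq (size bw.1) d.-1)))).
    rewrite (eq_bigr _ (fun bw _ => congr1 (fun z => bw.2 * z)
              (V_rep B bw.1 d.-1 il Eb))).
    under eq_bigr do rewrite addrAC.
    rewrite wsum_const ?(p_sum1 HB ea) // (V_split B q il Eb) qE -/d.
    rewrite addrAC addrCA lerD2l; exact: xr_step.
  rewrite lerD2l big_seq [X in (_ <= X)]big_seq; apply: ler_sum => bw bin.
  apply: ler_wpM2l; first exact: (p_ge0 HB ea bin).
  have := IH (nxt h i a bw.1) (replace_at b i (nseq (size bw.1) d.-1)).
  rewrite last_nxt; move/(_ _)/le_trans; apply.
    by rewrite !size_rep // size_nseq Eb.
  rewrite lerD2l; apply: ler_wpM2r; first by case/andP: (QN_bounds HB Hs N (nxt h i a bw.1)).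
  rewrite P_rep (P_split B ib) -/d lerD2r lerD2l.
  exact: (gg_step HB d (size_Lw bin)).
rewrite le_eqVlt; apply/orP; left; apply/eqP.
rewrite mulr_sumr -big_split; apply: eq_bigr => i _ /=.
rewrite mulr_sumr -big_split; apply: eq_bigr => a _ /=.
rewrite mulrCA -mulrDr; congr (_ * _); rewrite mulr_sumr -addrA; congr (_ + _).
rewrite -big_split; apply: eq_bigr => bw _ /=.
by rewrite mulrCA -mulrDr.
Qed.


Lemma lower_ET k q : ((xr B k q)%:E <= ETotal_star_s B s [:: q])%E.
Proof.
pose h0 : hist T A := ([:: q], [::]).
have hV N : xr B k q <= ETN B s N h0 + gg B k * QN B s N h0.
  have := @V_bound N h0 [:: k] erefl.
  by rewrite /Vf /Pf /= !big_cons !big_nil !addr0.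
have hQ N : cmin B * N%:R * QN B s N h0 <= ETN B s N h0 := QN_ETN HB Hs N h0.
case E: (ETotal_star_s B s [:: q]) => [l| |]; last 2 first.
- by rewrite leey.
- by have := ET_ge HB Hs 0 [:: q]; rewrite E leeNy_eq.
rewrite lee_fin.
have hl N : ETN B s N h0 <= l by have := ET_ge HB Hs N [:: q]; rewrite E lee_fin.
apply/ler_addgt0Pr => e e0.
set g := gg B k; set c := cmin B.
pose N := (Num.trunc (g * l / (c * e))).+1.
have hN : g * l / (c * e) < N%:R := truncnS_gt _.
have c0 : 0 < c := cmin_gt0 HB.
have g0 : 0 <= g := gg_ge0 HB k.
have hN' : g * l < N%:R * (c * e) by rewrite -ltr_pdivrMr // mulr_gt0.
have Q0 : 0 <= QN B s N h0 by case/andP: (QN_bounds HB Hs N h0).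
have := hV N; have := hQ N; have := hl N.
set Q := QN B s N h0; set Et := ETN B s N h0; set n := N%:R.
have n0 : 0 < n by rewrite /n ltr0n.
move=> H1 H2 H3.
have H4 : g * (c * n * Q) <= g * l by apply: ler_wpM2l => //; exact: le_trans H2 H1.
have H5 : (c * n) * (g * Q) < (c * n) * e.
  apply: le_lt_trans (_ : g * l < _); first by rewrite mulrCA.
  by rewrite (mulrC c n) -mulrA.
have H6 : g * Q < e by rewrite -(ltr_pM2l (mulr_gt0 c0 n0)).
apply: le_trans H3 _; apply: lerD => //; exact: ltW.
Qed.

End Part4.



Section Part5.
Variables (R : realType) (T A : finType) (B : bmdp R T A).
Hypothesis HB : wf_bmdp B.
Variable c' : T -> \bar R.
Hypothesis c'0 : nonneg_vec c'.
Hypothesis cfix : c' = Fop B c'.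

Lemma sig_ex q : exists a, enab B q a && (Fop B c' q == term B c' q a).
Proof. by case: (Fop_argmin HB c' q) => a ea E; exists a; rewrite ea E eqxx. Qed.

Definition sig q : A := xchoose (sig_ex q).

Lemma sigP q : enab B q (sig q) /\ Fop B c' q = term B c' q (sig q).
Proof. by case/andP: (xchooseP (sig_ex q)) => ea /eqP. Qed.

Definition sst : strategy R T A := fun h ia =>
  if last_state h is t :: _ then ((ia.1 == 0%N) && (ia.2 == sig t))%:R else 0.

Lemma collapse t rest (w : nat * A -> R) (F : 'I_(size (t :: rest)) -> A -> R) :
  (forall x, w x = ((x.1 == 0%N) && (x.2 == sig t))%:R) ->
  \sum_(i < size (t :: rest)) \sum_(a | enab B (tnth (in_tuple (t :: rest)) i) a)
     w (val i, a) * F i a = F ord0 (sig t).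
Proof.
move=> wE; rewrite big_ord_recl [X in _ + X]big1 ?addr0; last first.
  by move=> j _; apply: big1 => a _; rewrite wE /= mul0r.
rewrite (bigD1 (sig t)) /=; last by case: (sigP t).
rewrite wE !eqxx mul1r big1 ?addr0 // => a /andP[_ ne].
by rewrite wE /= (negbTE ne) mul0r.
Qed.

Lemma collapse0 t rest (w : nat * A -> R) :
  (forall x, w x = ((x.1 == 0%N) && (x.2 == sig t))%:R) ->
  \sum_(i < size (t :: rest)) \sum_(a | enab B (tnth (in_tuple (t :: rest)) i) a)
     w (val i, a) = 1.
Proof.
move=> wE; rewrite -[RHS](@collapse t rest w (fun _ _ => 1) wE).
by apply: eq_bigr => i _; apply: eq_bigr => a _; rewrite mulr1.
Qed.

Lemma sst_valid : valid_strategy B sst.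
Proof.
move=> h /=; case E: (last_state h) => [//|t rest] _.
have sE : forall x, sst h x = ((x.1 == 0%N) && (x.2 == sig t))%:R by rewrite /sst E.
split; first by move=> i a _; rewrite sE ler0n.
exact: collapse0.
Qed.

Lemma sst_bound N h : ((ETN B sst N h)%:E <= \sum_(t <- last_state h) c' t)%E.
Proof.
elim: N h => [|N IH] h; first by apply: sume_ge0 => t _.
rewrite ETN_S /=.
have IH' := fun i a be => IH (nxt h i a be).
move: IH'; rewrite /nxt.
case E: (last_state h) => [|t rest] IH'; first by rewrite big_ord0 big_nil.
have sE : forall x, sst h x = ((x.1 == 0%N) && (x.2 == sig t))%:R by rewrite /sst E.
rewrite (collapse _ sE) /= big_cons.
case: (sigP t) => ea tE.
have -> : tnth (in_tuple (t :: rest)) ord0 = t by [].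
have ct : c' t = term B c' t (sig t) by rewrite -tE -cfix.
rewrite ct /term EFinD -addeA; apply: leeD2l; rewrite -sumEFin.
have -> : (\sum_(bw <- trans B t (sig t)) (bw.2)%:E * \sum_(t0 <- bw.1) c' t0 +
    \sum_(t0 <- rest) c' t0 =
    \sum_(bw <- trans B t (sig t)) (bw.2)%:E * \sum_(t0 <- bw.1 ++ rest) c' t0)%E.
  rewrite big_seq [in RHS]big_seq.
  rewrite [in RHS](eq_bigr (fun bw => (bw.2)%:E * \sum_(t0 <- bw.1) c' t0 +
                              (bw.2)%:E * \sum_(t0 <- rest) c' t0)%E); last first.
    move=> bw bin; rewrite big_cat ge0_muleDr //.
      by apply: sume_ge0 => u _.
    by apply: sume_ge0 => u _.
  rewrite big_split /=; congr (_ + _)%E.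
  rewrite -ge0_sume_distrl; last by move=> bw bin; rewrite lee_fin (p_ge0 HB ea bin).
  by rewrite -big_seq sumEFin (p_sum1 HB ea) mul1e.
rewrite big_seq [X in (_ <= X)%E]big_seq; apply: lee_sum => bw bin.
rewrite EFinM; apply: lee_wpmul2l; first by rewrite lee_fin (p_ge0 HB ea bin).
have := IH' 0%N (sig t) bw.1; rewrite /last_state /= map_rcons last_rcons.
by rewrite /replace_at /= drop0.
Qed.

Lemma upper_ET q : (ETotal_star_s B sst [:: q] <= c' q)%E.
Proof.
apply: (ET_le HB sst_valid) => N.
by have := sst_bound N ([:: q], [::]); rewrite /= big_seq1.
Qed.

Lemma cstar_le q : (cstar B q <= c' q)%E.
Proof.
apply: le_trans (upper_ET q); apply: ereal_inf_lbound.
by exists sst => //; exact: sst_valid.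
Qed.

End Part5.

Unset Implicit Arguments. Set Strict Implicit.

Theorem theorem1 (R : realType) (T A : finType) (B : bmdp R T A)
  (HB : wf_bmdp B) :
  (* (a) monotone, continuous, and 0 <= x^k <= x^{k+1} *)
  ((forall x y : T -> \bar R, nonneg_vec x -> nonneg_vec y ->
      vle x y -> vle (Fop B x) (Fop B y)) /\
   (forall y : nat -> T -> \bar R,
      (forall k, nonneg_vec (y k)) -> (forall k, vle (y k) (y k.+1)) ->
      forall q, (fun k => Fop B (y k) q) @ \oo -->
                 Fop B (fun t => limn (fun k => y k t)) q) /\
   (forall k, nonneg_vec (xiter B k) /\ vle (xiter B k) (xiter B k.+1))) /\
  (* (b) *)
  cstar B = Fop B (cstar B) /\
  (* (c) *)
  (forall k, vle (xiter B k) (cstar B)) /\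
  (* (d) *)
  (forall c' : T -> \bar R, nonneg_vec c' -> c' = Fop B c' -> vle (cstar B) c') /\
  (* (e) *)
  (forall q, (fun k => xiter B k q) @ \oo --> cstar B q).
Proof.
have lowc : forall k, vle (xiter B k) (cstar B).
  move=> k q; rewrite (xrE HB); apply: le_ereal_inf_tmp => z [s Hs <-].
  exact: (lower_ET HB Hs k q).
have dpart : forall c' : T -> \bar R, nonneg_vec c' -> c' = Fop B c' -> vle (cstar B) c'.
  by move=> c' c0 cf q; exact: (cstar_le HB c0 cf).
pose xs := fun t => limn (fun k => xiter B k t).
have cx : forall t, (fun k => xiter B k t) @ \oo --> xs t.
  move=> t; apply: ereal_nondecreasing_is_cvgn; apply/nondecreasing_seqP => k.
  exact: (xiter_mono HB).
have xs0 : nonneg_vec xs.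
  move=> t; apply: (cvge_ge _ (cx t)); apply: nearW => k; exact: (xiter_ge0 HB).
have fx : Fop B xs = xs.
  apply/funext => t.
  have H1 : (fun k => Fop B (xiter B k) t) @ \oo --> Fop B xs t.
    exact: (Fop_cont HB (xiter_ge0 HB) (xiter_mono HB)).
  have H2 : (fun k => Fop B (xiter B k) t) @ \oo --> xs t.
    have -> : (fun k => Fop B (xiter B k) t) = (fun k => xiter B k.+1 t).
      by apply/funext => k; rewrite /xiter iterS.
    by rewrite (cvg_shiftS (fun k => xiter B k t)); exact: cx.
  exact: (cvg_unique _ H1 H2).
have cE : cstar B = xs.
  apply/funext => t; apply/le_anti/andP; split.
    by apply: dpart => //; rewrite fx.
  apply: (cvge_le _ (cx t)); apply: nearW => k; exact: lowc.
split.
  split; first by move=> x y x0 _ xy; exact: (Fop_mono HB).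
  split; first by move=> y y0 ym q; exact: (Fop_cont HB).
  by move=> k; split; [exact: (xiter_ge0 HB) | exact: (xiter_mono HB)].
split; first by rewrite cE fx.
split; first exact: lowc.
split; first exact: dpart.
by move=> q; rewrite cE; exact: cx.
Qed.
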